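(* Let $q \in \mathbb{Z}_{\geqslant 1}$. For any real $x \geqslant 1$, $$\sum_{\substack{n \leqslant x \\ q \mid n}} \mu(n) \sum_{\substack{k \leqslant x/n \\ k \mid n^\infty}} 1 = \sum_{\substack{n \leqslant x \\ q \mid \gamma(n)}} (-1)^{\omega(n)}.$$
   Context: $\mu$ is the Möbius function, $\omega(n)$ the number of distinct prime factors of $n$, $\gamma(n) := \prod_{p \mid n} p$ the squarefree kernel of $n$, and $k \mid n^\infty$ means that every prime factor of $k$ is a prime factor of $n$. Sums run over positive integers. *)

(* Defs.v *)
From mathcomp Require Import all_boot all_order all_algebra.
Set Implicit Arguments. Unset Strict Implicit. Unset Printing Implicit Defensive.
Import Order.TTheory GRing.Theory Num.Theory.

Definition omega (n : nat) : nat := size (primes n).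

Definition gamma (n : nat) : nat := \prod_(p <- primes n) p.

Definition squarefree (n : nat) : bool := all (fun p => logn p n <= 1) (primes n).

Definition mu (n : nat) : int :=
  if squarefree n then ((-1) ^+ omega n)%R else 0%R.

(* k | n^oo : every prime factor of k is a prime factor of n *)
Definition dvd_pow_infty (k n : nat) : bool :=
  all (fun p => p \in primes n) (primes k).

(* Main.v *)
Require Import Defs.
From mathcomp Require Import all_boot all_order all_algebra.
Import Order.TTheory GRing.Theory Num.Theory.
From mathcomp Require Import reals.

Lemma prod_primes_gt0 (s : seq nat) : all prime s -> 0 < \prod_(p <- s) p.
Proof.
elim: s => [|p s IH] /=; first by rewrite big_nil.
by case/andP=> pp ps; rewrite big_cons muln_gt0 prime_gt0 // IH.
Qed.

Lemma gamma_gt0 n : 0 < gamma n.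
Proof. apply: prod_primes_gt0; apply/allP => p; rewrite mem_primes; by case/andP. Qed.

Lemma primes_prod (s : seq nat) : all prime s -> sorted ltn s ->
  primes (\prod_(p <- s) p) = s.
Proof.
move=> ps ss; apply: (irr_sorted_eq ltn_trans ltnn) => //; first exact: sorted_primes.
move=> p; rewrite mem_primes prod_primes_gt0 //=.
case pp: (prime p) => /=; last first.
  by apply/esym/negP => ps'; move/allP: ps => /(_ _ ps'); rewrite pp.
rewrite Euclid_dvd_prod // big_has; apply/hasP/idP => [[p' p's]|].
  by move/allP: ps => /(_ _ p's) pp'; rewrite dvdn_prime2 // => /eqP ->.
by move=> H; exists p.
Qed.

Lemma primes_gamma m : primes (gamma m) = primes m.
Proof.
rewrite /gamma; apply: primes_prod; last exact: sorted_primes.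
apply/allP => p; rewrite mem_primes; by case/andP.
Qed.

Lemma logn_prod p (s : seq nat) : all prime s ->
  logn p (\prod_(q <- s) q) = count (pred1 p) s.
Proof.
elim: s => [|a s IH] /=; first by rewrite big_nil logn1.
case/andP=> pa ps; rewrite big_cons lognM; [|exact: prime_gt0|exact: prod_primes_gt0].
by rewrite IH // logn_prime // eq_sym.
Qed.

Lemma squarefree_gamma m : squarefree (gamma m).
Proof.
apply/allP => p _; rewrite /gamma logn_prod; last first.
  apply/allP => r; rewrite mem_primes; by case/andP.
rewrite count_uniq_mem ?leq_b1 //; exact: primes_uniq.
Qed.

Lemma mu_gamma m : mu (gamma m) = ((-1) ^+ omega m)%R.
Proof. by rewrite /mu squarefree_gamma /omega primes_gamma. Qed.

Lemma squarefree_gammaE n : 0 < n -> squarefree n -> gamma n = n.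
Proof.
move=> n0 /allP sq.
rewrite {2}(prod_prime_decomp n0) prime_decompE big_map /gamma.
apply: eq_big_seq => p pn /=.
have := sq p pn; rewrite leq_eqVlt ltnS leqn0 -[logn p n == 0]negbK -lt0n logn_gt0 pn orbF.
by move/eqP->.
Qed.

Lemma gamma_dvd m : 0 < m -> gamma m %| m.
Proof.
move=> m0; rewrite {2}(prod_prime_decomp m0) prime_decompE big_map /gamma.
rewrite big_seq [X in _ %| X]big_seq.
apply: (big_ind2 (fun a b => a %| b)) => //; first by move=> *; exact: dvdn_mul.
move=> p pm /=; apply: dvdn_exp => //; by rewrite logn_gt0.
Qed.

Lemma gamma_eq_primes m n : primes m = primes n -> gamma m = gamma n.
Proof. by rewrite /gamma => ->. Qed.

Lemma C_gamma n m : 0 < n -> squarefree n -> 0 < m ->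
  ((n %| m) && dvd_pow_infty (m %/ n) n) = (gamma m == n).
Proof.
move=> n0 sq m0; apply/andP/eqP => [[nm /allP H]|gm].
  have q0 : 0 < m %/ n by rewrite divn_gt0 // dvdn_leq.
  rewrite -(squarefree_gammaE _ n0 sq); apply: gamma_eq_primes.
  apply: (irr_sorted_eq ltn_trans ltnn); rewrite ?sorted_primes // => p.
  rewrite -{1}(divnK nm) primesM //; apply/orP/idP => [[/H|]|] //; by right.
have nm : n %| m by rewrite -gm gamma_dvd.
split => //; apply/allP => p pq.
have q0 : 0 < m %/ n by rewrite divn_gt0 // dvdn_leq.
rewrite -gm primes_gamma -(divnK nm) primesM // pq //.
Qed.
Local Open Scope ring_scope.

Lemma inner_count n N : (0 < n)%N ->
 \sum_(1 <= k < N.+1 | ((k*n <= N)%N && dvd_pow_infty k n)) (1:int)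
 = \sum_(1 <= m < N.+1 | ((n %| m)%N && dvd_pow_infty (m %/ n) n)) 1.
Proof.
move=> n0.
transitivity (\sum_(1 <= k < N.+1) \sum_(1 <= m < N.+1)
   (if m == (k*n)%N then (if dvd_pow_infty k n then 1 else 0) else 0 : int)).
  rewrite big_mkcond; apply: eq_big_nat => k /andP[k1 _]; rewrite -big_mkcond big_nat1_eq.
  have -> : (1 <= k * n < N.+1)%N = (k * n <= N)%N by rewrite ltnS muln_gt0 k1 n0.
  by case: (k * n <= N)%N; case: dvd_pow_infty.
rewrite exchange_big_nat [RHS]big_mkcond; apply: eq_big_nat => m /andP[m1 mN].
transitivity (\sum_(1 <= k < N.+1 | k == (m %/ n)%N)
   (if (n %| m)%N && dvd_pow_infty k n then 1 else 0 : int)).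
  rewrite [RHS]big_mkcond; apply: eq_big_nat => k _.
  case: eqP => [->|mk]; first by rewrite mulnK // eqxx dvdn_mull.
  case: eqP => // km; case nm: (n %| m)%N => //=.
  by exfalso; apply: mk; rewrite km divnK.
rewrite big_nat1_eq; case nm: (n %| m)%N => /=; last by case: ifP.
have -> : (1 <= m %/ n < N.+1)%N.
  rewrite divn_gt0 // dvdn_leq //= ltnS; apply: leq_trans (leq_div _ _) _.
  by rewrite -ltnS.
by [].
Qed.

Lemma main_nat N q :
 \sum_(1 <= n < N.+1 | (q %| n)%N)
    (mu n * \sum_(1 <= k < N.+1 | ((k*n <= N)%N && dvd_pow_infty k n)) (1:int))
 = \sum_(1 <= m < N.+1 | (q %| gamma m)%N) ((-1) ^+ omega m : int).
Proof.
rewrite big_mkcond.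
transitivity (\sum_(1 <= n < N.+1) \sum_(1 <= m < N.+1)
  (if (q %| n)%N && ((n %| m)%N && dvd_pow_infty (m %/ n) n) then mu n else 0)).
  apply: eq_big_nat => n /andP[n1 _]; rewrite inner_count //.
  case: ifP => qn /=; last by rewrite big1.
  rewrite big_distrr big_mkcond /=; apply: eq_bigr => m _.
  by case: ifP => _; rewrite ?mulr1 ?mulr0.
rewrite exchange_big_nat [RHS]big_mkcond; apply: eq_big_nat => m /andP[m1 mN].
transitivity (\sum_(1 <= n < N.+1)
   (if n == gamma m then (if (q %| n)%N then mu n else 0) else 0)).
  apply: eq_big_nat => n /andP[n1 _].
  case mu0: (mu n == 0).
    by rewrite (eqP mu0); case: ifP; case: ifP => //; case: ifP.
  have sq : squarefree n by move: mu0; rewrite /mu; case: ifP.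
  rewrite C_gamma // eq_sym.
  by case: (n == gamma m); case: (q %| n)%N.
rewrite -big_mkcond big_nat1_eq gamma_gt0 /= ltnS.
rewrite (leq_trans (dvdn_leq m1 (gamma_dvd _ m1)) mN) mu_gamma.
by [].
Qed.

Theorem lemma3p2 (R : realType) (q : nat) (x : R) :
  (1 <= q)%N -> 1 <= x ->
  \sum_(1 <= n < (Num.truncn x).+1 | (n%:R <= x) && (q %| n)%N)
     (mu n * (\sum_(1 <= k < (Num.truncn x).+1 | (k%:R <= x / n%:R) && dvd_pow_infty k n) 1))
  = \sum_(1 <= n < (Num.truncn x).+1 | (n%:R <= x) && (q %| gamma n)%N)
     ((-1) ^+ omega n : int).
Proof.
move=> q1 x1; have x0 : 0 <= x by apply: le_trans x1.
have leN n : (n%:R <= x) = (n <= Num.truncn x)%N by rewrite truncn_ge_nat.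
transitivity (\sum_(1 <= n < (Num.truncn x).+1 | (q %| n)%N)
    (mu n * \sum_(1 <= k < (Num.truncn x).+1 | ((k*n <= Num.truncn x)%N && dvd_pow_infty k n)) (1:int))).
  rewrite big_mkcond [RHS]big_mkcond; apply: eq_big_nat => n /andP[n1 nN].
  rewrite leN -ltnS nN /=; case: ifP => // _; congr (_ * _).
  apply: eq_bigl => k; rewrite ler_pdivlMr ?ltr0n // -natrM leN //.
rewrite main_nat [RHS]big_mkcond [LHS]big_mkcond; apply: eq_big_nat => n /andP[n1 nN].
by rewrite leN -ltnS nN.
Qed.
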